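(* For every $r\in(0,1/2)$ there is an integer $N\ge2$ with the following property. Let $\langle p_i/q_i\rangle_{i=1}^\infty$ belong to $\mathcal{QG}_N$, with expansions $p_i/q_i=[\langle b_{i,j}:\varepsilon_{i,j}\rangle_{j=1}^{m_i}]$, and define $k_1=1$ and $k_n=\prod_{i=1}^{n-1}q_{i,m_i}$ for $n\ge2$. Then for every $i\ge1$ and every $z\in\mathbb{C}$ with \[\left|z-\Big(\frac{p_i}{q_i}-i\,\frac{k_i}{q_i}\,\frac{\log 2}{2\pi}\Big)\right|\le\frac{\log2}{2\pi}\,\frac{k_i}{q_i}\] (where $i$ inside the parentheses denotes $\sqrt{-1}$), we have: (a) for every integer $n_i$ with $0\le n_i\le m_i-2$, $|G^{\circ n_i}(z)|\le r$, and $\arg G^{\circ n_i}(z)\in[-\pi/4,\pi/4]$ if $\operatorname{Re}G^{\circ n_i}(z)>0$, $\arg G^{\circ n_i}(z)\in[3\pi/4,5\pi/4]$ if $\operatorname{Re}G^{\circ n_i}(z)<0$; (b) $|G^{\circ(m_i-1)}(z)|\le r$.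
   Context: For $x\in\mathbb{R}$, $[x]$ is the closest integer to $x$ with the convention $x\in([x]-1/2,[x]+1/2]$ for $x>0$, $x\in[[x]-1/2,[x]+1/2)$ for $x<0$, $[0]=0$. $G(z)=-1/z-[\operatorname{Re}(-1/z)]$ for $z\ne0$. For integers $b_j\ge2$ and signs $\varepsilon_j$, $[\langle b_j:\varepsilon_j\rangle_{j=1}^m]=\cfrac{\varepsilon_1}{b_1+\cfrac{\varepsilon_2}{\ddots+\cfrac{\varepsilon_m}{b_m}}}$. For a nonzero rational $x\in[-1/2,1/2]$: set $x_1=x$, $x_{k+1}=-1/x_k-[-1/x_k]$ until $x_{m+1}=0$; $b_k=|[-1/x_k]|$, $\varepsilon_1=\operatorname{sign}(x_1)$, $\varepsilon_k=-\operatorname{sign}(x_{k-1})\operatorname{sign}(x_k)$ ($k\ge2$); then $x=[\langle b_k:\varepsilon_k\rangle_{k=1}^m]$ (its modified continued fraction expansion). For a sequence of nonzero rationals $p_i/q_i\in(-1/2,1/2]$ (lowest terms, $q_i>0$), let $p_i/q_i=[\langle b_{i,j}:\varepsilon_{i,j}\rangle_{j=1}^{m_i}]$ be this expansion and $q_{i,l}>0$ the denominator in lowest terms of $[\langle b_{i,j}:\varepsilon_{i,j}\rangle_{j=1}^l]$ (so $q_{i,m_i}=q_i$). For $N\ge2$, $\mathcal{QG}_N$ is the set of such sequences satisfying $b_{1,1}\ge N$, $b_{i+1,1}\ge q_{i,m_i}^2$ for all $i\ge1$, and $b_{i,j+1}\ge b_{i,j}^2$ for all $i\ge1$, $1\le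 j\le m_i-1$. *)

(* Defs.v *)
From Stdlib Require Export Reals QArith List.
From Coquelicot Require Export Coquelicot.

(** Floor and ceiling on R, via Stdlib's [up] (up y is the least integer > y). *)
Definition Zfloor (y : R) : Z := (up y - 1)%Z.
Definition Zceil (y : R) : Z := (- Zfloor (- y))%Z.

(** The closest integer [x] with the paper's tie-breaking convention:
    x in ([x]-1/2, [x]+1/2] for x > 0, x in [[x]-1/2, [x]+1/2) for x < 0, [0]=0. *)
Definition nint (x : R) : Z :=
  if Rlt_dec 0 x then Zceil (x - /2)
  else if Rlt_dec x 0 then Zfloor (x + /2)
  else 0%Z.

(** G(z) = -1/z - [Re(-1/z)].  (At z = 0 Coquelicot's Cinv gives 0 since
    Stdlib has / 0 = 0, so G 0 = 0; the paper leaves G(0) undefined.) *)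
Definition G (z : C) : C :=
  let w := Copp (Cinv z) in Cminus w (RtoC (IZR (nint (Re w)))).

Definition Giter (n : nat) (z : C) : C := Nat.iter n G z.

(** "arg w lies in [a,b]": some value of the (multivalued) argument of w lies in [a,b]. *)
Definition arg_in (w : C) (a b : R) : Prop :=
  exists t : R, (a <= t <= b)%R /\ w = Cmult (RtoC (Cmod w)) (cos t, sin t).

Definition nintQ (x : Q) : Z := nint (Q2R x).

Definition mcf_step (x : Q) : Q := ((- / x) - inject_Z (nintQ (- / x)))%Q.

(** x_k (1-indexed): x_1 = x. *)
Definition mcf_x (x : Q) (k : nat) : Q := Nat.iter (k - 1) mcf_step x.

Definition mcf_b (x : Q) (k : nat) : Z := Z.abs (nintQ (- / mcf_x x k)%Q).

Definition Qsign (y : Q) : Z := Z.sgn (Qnum y).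

Definition mcf_eps (x : Q) (k : nat) : Z :=
  if (k <=? 1)%nat then Qsign (mcf_x x 1)
  else (- (Qsign (mcf_x x (k - 1)) * Qsign (mcf_x x k)))%Z.

Definition mcf_len (x : Q) (m : nat) : Prop :=
  (1 <= m)%nat /\
  (forall k, (1 <= k <= m)%nat -> ~ (mcf_x x k == 0)%Q) /\
  (mcf_x x (m + 1) == 0)%Q.

(** [<b_j : eps_j>_{j=1}^l] = eps_1/(b_1 + eps_2/(b_2 + ... + eps_l/b_l)). *)
Definition mcf_trunc (x : Q) (l : nat) : Q :=
  fold_right (fun j acc => (inject_Z (mcf_eps x j) / (inject_Z (mcf_b x j) + acc))%Q)
             0%Q (seq 1 l).

Definition mcf_q (x : Q) (l : nat) : Z := Zpos (Qden (Qred (mcf_trunc x l))).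

(** ---- The class QG_N.  The sequence p_i/q_i is indexed by i >= 1
    (values at index 0 are irrelevant); m i is the length m_i of the
    expansion of p_i/q_i. ---- *)
Definition ratQ (p q : nat -> Z) (i : nat) : Q := p i # Z.to_pos (q i).

Definition in_QG (N : Z) (p q : nat -> Z) (m : nat -> nat) : Prop :=
  (forall i, (1 <= i)%nat ->
     (0 < q i)%Z /\ Z.gcd (p i) (q i) = 1%Z /\ p i <> 0%Z /\
     (- (1 # 2) < ratQ p q i <= 1 # 2)%Q /\
     mcf_len (ratQ p q i) (m i)) /\
  (N <= mcf_b (ratQ p q 1) 1)%Z /\
  (forall i, (1 <= i)%nat ->
     (mcf_q (ratQ p q i) (m i) ^ 2 <= mcf_b (ratQ p q (S i)) 1)%Z) /\
  (forall i j, (1 <= i)%nat -> (1 <= j <= m i - 1)%nat ->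
     (mcf_b (ratQ p q i) j ^ 2 <= mcf_b (ratQ p q i) (S j))%Z).

Definition kseq (p q : nat -> Z) (m : nat -> nat) (n : nat) : Z :=
  fold_right (fun i acc => (mcf_q (ratQ p q i) (m i) * acc)%Z) 1%Z (seq 1 (n - 1)).

(* Main.v *)
Require Import Defs.
From Stdlib Require Import Qreals Lra Lia Psatz.
Open Scope R_scope.


Lemma Zfloor_spec y : IZR (Zfloor y) <= y < IZR (Zfloor y) + 1.
Proof.
  unfold Zfloor. destruct (archimed y) as [H1 H2].
  rewrite minus_IZR. simpl. lra.
Qed.

Lemma Zfloor_unique y n : IZR n <= y < IZR n + 1 -> Zfloor y = n.
Proof.
  intros [H1 H2]. unfold Zfloor.
  assert (E : (n + 1)%Z = up y).
  { apply tech_up; rewrite plus_IZR; simpl; lra. }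
  rewrite <- E. lia.
Qed.

Lemma nint_near A t : Rabs t < /2 -> nint (IZR A + t) = A.
Proof.
  intros Ht. apply Rabs_def2 in Ht. destruct Ht as [Ht1 Ht2].
  unfold nint. destruct (Rlt_dec 0 (IZR A + t)).
  - unfold Zceil. rewrite (Zfloor_unique _ (- A)). lia.
    rewrite opp_IZR. lra.
  - destruct (Rlt_dec (IZR A + t) 0).
    + apply Zfloor_unique. lra.
    + assert (IZR A + t = 0) by lra.
      assert (-1 < IZR A < 1) by lra.
      destruct H0 as [H3 H4]. apply lt_IZR in H3. apply lt_IZR in H4.
      lia.
Qed.

Lemma nint_bound y : Rabs (y - IZR (nint y)) <= /2.
Proof.
  unfold nint. destruct (Rlt_dec 0 y).
  - unfold Zceil. pose proof (Zfloor_spec (- (y - /2))).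
    rewrite opp_IZR. apply Rabs_le. lra.
  - destruct (Rlt_dec y 0).
    + pose proof (Zfloor_spec (y + /2)). apply Rabs_le. lra.
    + simpl. assert (y = 0) by lra. subst. rewrite Rminus_0_r, Rabs_R0. lra.
Qed.

Lemma abs_le_inv a b : Rabs a <= b -> - b <= a <= b.
Proof. intros H. destruct (Rcase_abs a); [rewrite Rabs_left in H| rewrite Rabs_right in H]; lra. Qed.


Definition Disk (w : C) (a rho : R) : Prop :=
  (fst w - a) * (fst w - a) + (snd w + rho) * (snd w + rho) <= rho * rho.

Lemma G_step x y a rho :
  a <> 0 -> 0 <= rho -> Disk (x, y) a rho ->
  Rabs (- / a - IZR (nint (- / a))) + rho / (a * a) < /2 ->
  Disk (G (x, y)) (- / a - IZR (nint (- / a))) (rho / (a * a)).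
Proof.
  intros Ha Hr HD Hs. unfold Disk in *. simpl in HD.
  set (A := nint (- / a)) in *.
  assert (Hs0 : x * x + y * y <> 0).
  { intro E. assert (x = 0) by nra. assert (y = 0) by nra. subst.
    assert (a * a <= 0) by nra. assert (0 < a * a) by (apply Rsqr_pos_lt; auto). lra. }
  assert (Hs1 : 0 < x * x + y * y) by (pose proof (Rle_0_sqr x); pose proof (Rle_0_sqr y); unfold Rsqr in *; lra).
  set (s := x * x + y * y) in *.
  set (X := - (x / s)). set (Y := y / s). set (r' := rho / (a * a)) in *.
  assert (Ha2 : 0 < a * a) by (apply Rsqr_pos_lt; auto).
  assert (Hr' : 0 <= r') by (unfold r'; apply Rmult_le_pos; [lra| left; apply Rinv_0_lt_compat; lra]).
  assert (Key : (X + / a) * (X + / a) + (Y + r') * (Y + r') - r' * r'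
               = ((x - a) * (x - a) + (y + rho) * (y + rho) - rho * rho) / (a * a * s)).
  { unfold X, Y, r', s. field. split; auto. }
  assert (HK : (X + / a) * (X + / a) + (Y + r') * (Y + r') <= r' * r').
  { assert (((x - a) * (x - a) + (y + rho) * (y + rho) - rho * rho) / (a * a * s) <= 0).
    { unfold Rdiv. apply Rmult_le_0_r. lra. left. apply Rinv_0_lt_compat. nra. }
    lra. }
  assert (HX : Rabs (X + / a) <= r').
  { assert (Hsq : (X + / a) * (X + / a) <= r' * r') by (pose proof (Rle_0_sqr (Y + r')); unfold Rsqr in *; lra).
    apply Rabs_le; split; nra. }
  unfold G; unfold Cminus, Copp, Cinv, Cplus, Re, RtoC; simpl.
  replace (x * (x * 1) + y * (y * 1)) with s by (unfold s; ring).
  fold X. replace (- (- y / s)) with Y by (unfold Y; field; lra).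
  assert (E : nint X = A).
  { replace X with (IZR A + ((X + / a) + (- / a - IZR A))) by ring.
    apply nint_near. eapply Rle_lt_trans. apply Rabs_triang. lra. }
  rewrite E.
  replace (X + - IZR A - (- / a - IZR A)) with (X + / a) by ring.
  replace (Y + - 0 + r') with (Y + r') by ring. exact HK.
Qed.


Lemma disk_bounds x y a rho : 0 <= rho -> Disk (x, y) a rho ->
  Rabs (x - a) <= rho /\ -2 * rho <= y <= 0 /\ Cmod (x, y) <= Rabs a + 2 * rho.
Proof.
  intros Hr HD. unfold Disk in HD; simpl in HD.
  assert (H1 : (x - a) * (x - a) <= rho * rho) by (pose proof (Rle_0_sqr (y + rho)); unfold Rsqr in *; lra).
  assert (H2 : (y + rho) * (y + rho) <= rho * rho) by (pose proof (Rle_0_sqr (x - a)); unfold Rsqr in *; lra).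
  assert (Hx : Rabs (x - a) <= rho) by (apply Rabs_le; split; nra).
  assert (Hy : -2 * rho <= y <= 0) by (split; nra).
  repeat split; try tauto.
  unfold Cmod; simpl.
  assert (Hpa : 0 <= Rabs a) by apply Rabs_pos.
  rewrite <- (sqrt_Rsqr (Rabs a + 2 * rho)) by lra.
  apply sqrt_le_1_alt. unfold Rsqr.
  assert (Hax : a * (x - a) <= Rabs a * rho).
  { apply Rle_trans with (Rabs (a * (x - a))). apply Rle_abs.
    rewrite Rabs_mult. apply Rmult_le_compat_l. apply Rabs_pos. lra. }
  assert (Haa : a * a = Rabs a * Rabs a) by (destruct (Rcase_abs a); [rewrite Rabs_left by lra| rewrite Rabs_right by lra]; ring).
  assert (-2*rho*y <= 4*rho*rho) by nra.
  assert ((x-a)*(x-a) + y*y <= 4*rho*rho) by nra.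
  simpl. nra.
Qed.

Lemma disk_cone x y a rho : a <> 0 -> 0 <= rho -> rho <= Rabs a / 4 -> Disk (x, y) a rho ->
  x <> 0 /\ Rabs y <= Rabs x.
Proof.
  intros Ha Hr Hra HD. destruct (disk_bounds x y a rho Hr HD) as [H1 [H2 _]].
  assert (Rabs a - Rabs x <= rho).
  { pose proof (Rabs_triang_inv a x). rewrite Rabs_minus_sym in H1. lra. }
  assert (Rabs y <= 2 * rho) by (apply Rabs_le; lra).
  split.
  - intro E. subst. rewrite Rabs_R0 in H. pose proof (Rabs_pos_lt a Ha). lra.
  - pose proof (Rabs_pos a). lra.
Qed.

Lemma arg_lemma x y : x <> 0 -> Rabs y <= Rabs x ->
  (0 < x -> arg_in (x, y) (- (PI / 4)) (PI / 4)) /\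
  (x < 0 -> arg_in (x, y) (3 * PI / 4) (5 * PI / 4)).
Proof.
  intros Hx Hy.
  set (u := y / x).
  assert (Hu : -1 <= u <= 1).
  { unfold u. destruct (Rlt_dec 0 x).
    - rewrite (Rabs_right x) in Hy by lra. apply abs_le_inv in Hy.
      split; [apply Rmult_le_reg_r with x; [lra|]; unfold Rdiv; rewrite Rmult_assoc, Rinv_l by lra; lra|].
      apply Rmult_le_reg_r with x; [lra|]; unfold Rdiv; rewrite Rmult_assoc, Rinv_l by lra; lra.
    - rewrite (Rabs_left x) in Hy by lra. apply abs_le_inv in Hy.
      split; [apply Rmult_le_reg_r with (-x); [lra|]; unfold Rdiv; replace (y * / x * - x) with (-y) by (field; lra); lra|].
      apply Rmult_le_reg_r with (-x); [lra|]; unfold Rdiv; replace (y * / x * - x) with (-y) by (field; lra); lra. }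
  assert (Hat : - (PI / 4) <= atan u <= PI / 4).
  { rewrite <- atan_1. rewrite <- atan_opp. split.
    - destruct (Req_dec u (-1)). rewrite H; right; f_equal; ring. left; apply atan_increasing; lra.
    - destruct (Req_dec u 1). rewrite H; lra. left; apply atan_increasing; lra. }
  assert (Hsq : 0 < sqrt (1 + u²)).
  { apply sqrt_lt_R0. pose proof (Rle_0_sqr u). lra. }
  assert (Hmod : Cmod (x, y) = Rabs x * sqrt (1 + u²)).
  { unfold Cmod; simpl. rewrite <- (sqrt_Rsqr (Rabs x)) by apply Rabs_pos.
    rewrite <- sqrt_mult. f_equal. rewrite <- Rsqr_abs. unfold u, Rsqr. field. auto.
    apply Rle_0_sqr. pose proof (Rle_0_sqr u). lra. }
  assert (Hux : y = u * x) by (unfold u; field; auto).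
  split; intro Hs.
  - exists (atan u). split. exact Hat.
    rewrite Hmod, cos_atan, sin_atan, Rabs_right by lra.
    unfold Cmult, RtoC; simpl. apply injective_projections; simpl; [field; lra| pattern y at 1; rewrite Hux; field; lra].
  - exists (atan u + PI). split. lra.
    rewrite Hmod, neg_cos, neg_sin, cos_atan, sin_atan, Rabs_left by lra.
    unfold Cmult, RtoC; simpl. apply injective_projections; simpl; [field; lra| pattern y at 1; rewrite Hux; field; lra].
Qed.


Lemma mcf_x_S x k : (1 <= k)%nat -> mcf_x x (S k) = mcf_step (mcf_x x k).
Proof. intros H. unfold mcf_x. destruct k. lia. simpl. rewrite Nat.sub_0_r. reflexivity. Qed.

Lemma mcf_x_1 x : mcf_x x 1 = x.
Proof. reflexivity. Qed.

Lemma Q2R_inject_Z z : Q2R (inject_Z z) = IZR z.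
Proof. unfold Q2R, inject_Z. simpl. field. Qed.

Lemma Q2R_nz y : ~ (y == 0)%Q -> Q2R y <> 0.
Proof. intros H E. apply H. apply eqR_Qeq. rewrite E. unfold Q2R; simpl; field. Qed.

Lemma Q2R_nz' y : Q2R y <> 0 -> ~ (y == 0)%Q.
Proof. intros H E. apply H. apply Qeq_eqR in E. rewrite E. unfold Q2R; simpl; field. Qed.

Lemma step_R y : ~ (y == 0)%Q ->
  Q2R (mcf_step y) = - / Q2R y - IZR (nint (- / Q2R y)).
Proof.
  intros H. unfold mcf_step, nintQ.
  rewrite Q2R_minus, Q2R_opp, Q2R_inv, Q2R_inject_Z by auto.
  reflexivity.
Qed.

Lemma step_den y : ~ (y == 0)%Q -> Zpos (Qden (mcf_step y)) = Z.abs (Qnum y).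
Proof.
  intros H. destruct y as [n d]. unfold mcf_step. simpl.
  destruct n as [|pn|pn]; simpl.
  - exfalso. apply H. reflexivity.
  - rewrite Pos.mul_1_r. reflexivity.
  - rewrite Pos.mul_1_r. reflexivity.
Qed.

Lemma Q2R_abs y : Rabs (Q2R y) = IZR (Z.abs (Qnum y)) / IZR (Zpos (Qden y)).
Proof.
  unfold Q2R. rewrite Rabs_mult, Rabs_inv, abs_IZR. rewrite (Rabs_right (IZR (Zpos _))). reflexivity.
  apply Rle_ge, IZR_le. lia.
Qed.

Lemma Qsign_R y : IZR (Qsign y) * Rabs (Q2R y) = Q2R y.
Proof.
  rewrite Q2R_abs. unfold Qsign, Q2R. destruct y as [n d]; simpl.
  destruct n; simpl; unfold Rdiv; try ring. rewrite <- (Pos2Z.opp_pos p), (opp_IZR (Z.pos p)). ring.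
Qed.

Lemma Qsign_sq y : ~ (y == 0)%Q -> IZR (Qsign y) * IZR (Qsign y) = 1.
Proof.
  intros H. unfold Qsign. destruct y as [n d]; simpl.
  destruct n; simpl; try lra. exfalso; apply H; reflexivity.
Qed.


Section Rat.
Variable x : Q.
Variable m : nat.
Hypothesis Hx : -/2 < Q2R x <= /2.
Hypothesis Hlen : mcf_len x m.

Definition a k := Q2R (mcf_x x k).
Definition Dn k := IZR (Zpos (Qden (mcf_x x k))).
Definition Bn k := IZR (mcf_b x k).

Lemma x_nz k : (1 <= k <= m)%nat -> ~ (mcf_x x k == 0)%Q.
Proof. intros H. destruct Hlen as [_ [H2 _]]. auto. Qed.

Lemma a_nz k : (1 <= k <= m)%nat -> a k <> 0.
Proof. intros H. apply Q2R_nz, x_nz; auto. Qed.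

Lemma a_last : a (S m) = 0.
Proof.
  destruct Hlen as [_ [_ H3]]. unfold a. rewrite <- Nat.add_1_r.
  apply Qeq_eqR in H3. rewrite H3. unfold Q2R; simpl; field.
Qed.

Lemma a_step k : (1 <= k <= m)%nat -> a (S k) = - / a k - IZR (nint (- / a k)).
Proof. intros H. unfold a. rewrite mcf_x_S by lia. apply step_R, x_nz; auto. Qed.

Lemma b_eq k : (1 <= k <= m)%nat -> mcf_b x k = Z.abs (nint (- / a k)).
Proof.
  intros H. unfold mcf_b, nintQ, a. rewrite Q2R_opp, Q2R_inv by (apply x_nz; auto). reflexivity.
Qed.

Lemma a_small k : (1 <= k <= S m)%nat -> Rabs (a k) <= /2.
Proof.
  intros H. destruct k as [|k]. lia. destruct k as [|k].
  - unfold a. rewrite mcf_x_1. apply Rabs_le. lra.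
  - rewrite a_step by lia. apply nint_bound.
Qed.

Lemma Bn_bounds k : (1 <= k <= m)%nat -> Bn k - /2 <= / Rabs (a k) <= Bn k + /2.
Proof.
  intros H. unfold Bn. rewrite b_eq by auto. rewrite abs_IZR.
  set (A := IZR (nint (- / a k))).
  assert (E : - / a k = A + a (S k)) by (rewrite a_step by auto; unfold A; ring).
  assert (E2 : / Rabs (a k) = Rabs (A + a (S k))).
  { rewrite <- E, Rabs_Ropp, Rabs_inv. reflexivity. }
  rewrite E2. pose proof (a_small (S k) ltac:(lia)).
  pose proof (Rabs_triang A (a (S k))).
  pose proof (Rabs_triang_inv A (- a (S k))).
  replace (A - - a (S k)) with (A + a (S k)) in H2 by ring. rewrite Rabs_Ropp in H2.
  lra.
Qed.

Lemma Dn_pos k : 1 <= Dn k.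
Proof. unfold Dn. apply IZR_le. lia. Qed.

Lemma a_abs k : (1 <= k <= m)%nat -> Rabs (a k) = Dn (S k) / Dn k.
Proof.
  intros H. unfold a, Dn. rewrite Q2R_abs. rewrite mcf_x_S by lia.
  rewrite step_den by (apply x_nz; auto). reflexivity.
Qed.

Lemma Dn_bounds k : (1 <= k <= m)%nat ->
  Dn (S k) * (Bn k - /2) <= Dn k <= Dn (S k) * (Bn k + /2).
Proof.
  intros H. pose proof (Bn_bounds k H) as HB. rewrite a_abs in HB by auto.
  pose proof (Dn_pos k). pose proof (Dn_pos (S k)).
  replace (/ (Dn (S k) / Dn k)) with (Dn k / Dn (S k)) in HB by (field; lra).
  destruct HB as [HB1 HB2]. split.
  - apply Rmult_le_reg_r with (/ Dn (S k)). apply Rinv_0_lt_compat; lra.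
    replace (Dn (S k) * (Bn k - / 2) * / Dn (S k)) with (Bn k - /2) by (field; lra). exact HB1.
  - apply Rmult_le_reg_r with (/ Dn (S k)). apply Rinv_0_lt_compat; lra.
    replace (Dn (S k) * (Bn k + / 2) * / Dn (S k)) with (Bn k + /2) by (field; lra). exact HB2.
Qed.


Lemma sign_rel k : (1 <= k <= m)%nat ->
  Bn k - IZR (Qsign (mcf_x x k)) * a (S k) = / Rabs (a k).
Proof.
  intros H. pose proof (Qsign_R (mcf_x x k)) as HS. fold (a k) in HS.
  pose proof (a_nz k H) as Hnz. pose proof (a_small k ltac:(lia)) as Hsm.
  pose proof (a_small (S k) ltac:(lia)) as Hsm2.
  unfold Bn. rewrite b_eq by auto. rewrite abs_IZR.
  set (A := IZR (nint (- / a k))) in *.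
  assert (E : a (S k) = - / a k - A) by (rewrite a_step by auto; reflexivity).
  apply abs_le_inv in Hsm2.
  destruct (Rlt_dec 0 (a k)) as [Hp|Hn].
  - rewrite Rabs_right in HS, Hsm by lra.
    assert (Hs1 : IZR (Qsign (mcf_x x k)) = 1).
    { apply Rmult_eq_reg_r with (a k); lra. }
    assert (Hinv : 2 <= / a k).
    { apply Rmult_le_reg_r with (a k). lra. rewrite Rinv_l by lra. lra. }
    rewrite Hs1, (Rabs_right (a k)) by lra. rewrite (Rabs_left A) by lra. lra.
  - assert (Hn' : a k < 0) by lra.
    rewrite Rabs_left in HS, Hsm by lra.
    assert (Hs1 : IZR (Qsign (mcf_x x k)) = -1).
    { apply Rmult_eq_reg_r with (- a k); lra. }
    assert (Hinv : 2 <= - / a k).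
    { apply Rmult_le_reg_r with (- a k). lra.
      replace (- / a k * - a k) with (/ a k * a k) by ring. rewrite Rinv_l by lra. lra. }
    rewrite Hs1, (Rabs_left (a k)) by lra. rewrite (Rabs_right A) by lra.
    rewrite Rinv_opp. lra.
Qed.

Definition Ff (j : nat) (acc : Q) : Q :=
  (inject_Z (mcf_eps x j) / (inject_Z (mcf_b x j) + acc))%Q.

Lemma trunc_gen l : forall s, (1 <= s)%nat -> (s + l = S m)%nat ->
  Q2R (fold_right Ff 0%Q (seq s l)) = IZR (mcf_eps x s) * Rabs (a s).
Proof.
  induction l as [|l IH]; intros s Hs Hsl.
  - simpl. replace s with (S m) by lia. rewrite a_last, Rabs_R0.
    unfold Q2R; simpl; field.
  - change (seq s (S l)) with (s :: seq (S s) l).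
    change (fold_right Ff 0%Q (s :: seq (S s) l)) with (Ff s (fold_right Ff 0%Q (seq (S s) l))).
    unfold Ff at 1.
    assert (Hrec := IH (S s) ltac:(lia) ltac:(lia)).
    assert (Heps : IZR (mcf_eps x (S s)) * Rabs (a (S s)) = - IZR (Qsign (mcf_x x s)) * a (S s)).
    { unfold mcf_eps. destruct s as [|s']. lia.
      replace (S (S s') <=? 1)%nat with false by reflexivity.
      replace (S (S s') - 1)%nat with (S s') by reflexivity.
      rewrite opp_IZR, mult_IZR.
      pose proof (Qsign_R (mcf_x x (S (S s')))) as HS. fold (a (S (S s'))) in HS.
      transitivity (- IZR (Qsign (mcf_x x (S s'))) * (IZR (Qsign (mcf_x x (S (S s')))) * Rabs (a (S (S s'))))).
      ring. rewrite HS. reflexivity. }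
    assert (Hden : Q2R (inject_Z (mcf_b x s) + fold_right Ff 0%Q (seq (S s) l)) = / Rabs (a s)).
    { rewrite Q2R_plus, Q2R_inject_Z, Hrec, Heps. rewrite <- sign_rel by lia. unfold Bn. ring. }
    assert (Hnz : Rabs (a s) <> 0) by (apply Rabs_no_R0, a_nz; lia).
    rewrite Q2R_div. rewrite Hden, Q2R_inject_Z. field. auto.
    apply Q2R_nz'. rewrite Hden. apply Rinv_neq_0_compat. auto.
Qed.

Lemma trunc_eq : (mcf_trunc x m == x)%Q.
Proof.
  apply eqR_Qeq. unfold mcf_trunc. fold Ff.
  destruct Hlen as [Hm _].
  rewrite trunc_gen by lia. unfold mcf_eps. simpl.
  rewrite mcf_x_1. unfold a. rewrite mcf_x_1. apply Qsign_R.
Qed.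

End Rat.


Section Main.
Variable x : Q.
Variable m : nat.
Hypothesis Hx : -/2 < Q2R x <= /2.
Hypothesis Hlen : mcf_len x m.
Variables N kk c : R.
Hypothesis HN : 64 <= N.
Hypothesis Hkk : 1 <= kk.
Hypothesis HNk : N * kk <= Bn x 1.
Hypothesis Hc : 0 < c <= 1.
Hypothesis Hgrow : forall j, (1 <= j)%nat -> (j + 1 <= m)%nat -> Bn x j * Bn x j <= Bn x (S j).

Definition rhoF n := c * kk * Dn x 1 / (Dn x (S n) * Dn x (S n)).

Lemma m_pos : (1 <= m)%nat.
Proof. destruct Hlen; auto. Qed.

Lemma BN k : (1 <= k <= m)%nat -> N <= Bn x k.
Proof.
  induction k as [|k IH]; intros H. lia.
  destruct k as [|k]. nra.
  assert (N <= Bn x (S k)) by (apply IH; lia).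
  pose proof (Hgrow (S k) ltac:(lia) ltac:(lia)). nra.
Qed.

Lemma U k : (1 <= k <= m)%nat -> Bn x 1 * Dn x 1 <= (2 * Bn x k - 2) * Dn x k.
Proof.
  induction k as [|k IH]; intros H. lia.
  destruct k as [|k].
  - pose proof (BN 1 ltac:(lia)). pose proof (Dn_pos x 1). nra.
  - specialize (IH ltac:(lia)).
    pose proof (BN (S k) ltac:(lia)).
    pose proof (Dn_bounds x m Hx Hlen (S k) ltac:(lia)) as [_ HD].
    pose proof (Hgrow (S k) ltac:(lia) ltac:(lia)).
    pose proof (Dn_pos x (S (S k))).
    assert ((2 * Bn x (S k) - 2) * Dn x (S k) <= (2 * Bn x (S k) - 2) * (Dn x (S (S k)) * (Bn x (S k) + /2))).
    { apply Rmult_le_compat_l; nra. }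
    nra.
Qed.

Lemma rho_pos n : 0 <= rhoF n.
Proof.
  unfold rhoF. pose proof (Dn_pos x 1). pose proof (Dn_pos x (S n)).
  apply Rmult_le_pos. apply Rmult_le_pos; [apply Rmult_le_pos|]; lra. left. apply Rinv_0_lt_compat. nra.
Qed.

Lemma rho_mul n : rhoF n * (Dn x (S n) * Dn x (S n)) = c * kk * Dn x 1.
Proof. unfold rhoF. pose proof (Dn_pos x (S n)). field. nra. Qed.

Lemma rho_key n : (S n <= m)%nat -> N * rhoF n * Dn x (S n) <= c * (2 * Bn x (S n) - 2).
Proof.
  intros H. pose proof (rho_mul n). pose proof (U (S n) ltac:(lia)).
  pose proof (Dn_pos x (S n)). pose proof (Dn_pos x 1). pose proof (rho_pos n).
  assert (N * (c * kk * Dn x 1) <= c * (Bn x 1 * Dn x 1)).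
  { replace (N * (c * kk * Dn x 1)) with (c * Dn x 1 * (N * kk)) by ring.
    replace (c * (Bn x 1 * Dn x 1)) with (c * Dn x 1 * Bn x 1) by ring.
    apply Rmult_le_compat_l; nra. }
  assert (N * rhoF n * Dn x (S n) * Dn x (S n) <= c * (2 * Bn x (S n) - 2) * Dn x (S n)) by nra.
  apply Rmult_le_reg_r with (Dn x (S n)). lra. lra.
Qed.

Lemma rho_bound1 n : (S n <= m)%nat -> rhoF n <= 4 * c / N.
Proof.
  intros H. pose proof (rho_key n H).
  pose proof (BN (S n) ltac:(lia)).
  pose proof (Dn_bounds x m Hx Hlen (S n) ltac:(lia)) as [HD _].
  pose proof (Dn_pos x (S (S n))). pose proof (rho_pos n).
  assert (Dn x (S n) >= Bn x (S n) - /2) by nra.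
  assert (0 <= N * rhoF n) by (apply Rmult_le_pos; lra).
  assert (N * rhoF n * (Bn x (S n) - /2) <= c * (2 * Bn x (S n) - 2)).
  { apply Rle_trans with (N * rhoF n * Dn x (S n)); [|lra]. apply Rmult_le_compat_l; lra. }
  assert (N * rhoF n <= 4 * c) by nra.
  apply Rmult_le_reg_l with N. lra.
  replace (N * (4 * c / N)) with (4 * c) by (field; lra). lra.
Qed.

Lemma rho_bound2 n : (S (S n) <= m)%nat -> rhoF n * (N * Bn x (S (S n))) <= 8 * c.
Proof.
  intros H. pose proof (rho_key n ltac:(lia)).
  pose proof (BN (S n) ltac:(lia)). pose proof (BN (S (S n)) ltac:(lia)).
  pose proof (Dn_bounds x m Hx Hlen (S n) ltac:(lia)) as [HD _].
  pose proof (Dn_bounds x m Hx Hlen (S (S n)) ltac:(lia)) as [HD2 _].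
  pose proof (Dn_pos x (S (S (S n)))). pose proof (rho_pos n).
  assert (Dn x (S (S n)) >= Bn x (S (S n)) / 2) by nra.
  assert (Dn x (S n) >= (Bn x (S n) - /2) * (Bn x (S (S n)) / 2)) by nra.
  set (B1 := Bn x (S n)) in *. set (B2 := Bn x (S (S n))) in *.
  assert (N * rhoF n * ((B1 - /2) * (B2 / 2)) <= c * (2 * B1 - 2)).
  { apply Rle_trans with (N * rhoF n * Dn x (S n)); [|lra].
    apply Rmult_le_compat_l; nra. }
  nra.
Qed.

Lemma a_upper k : (1 <= k <= m)%nat -> Rabs (a x k) <= 2 / N.
Proof.
  intros H. pose proof (Bn_bounds x m Hx Hlen k H) as [H1 _].
  pose proof (BN k H). pose proof (a_nz x m Hlen k H).
  pose proof (Rabs_pos_lt _ H2).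
  assert (Hi : / Rabs (a x k) >= N / 2) by lra.
  assert (1 >= N / 2 * Rabs (a x k)).
  { replace 1 with (/ Rabs (a x k) * Rabs (a x k)) by (field; lra). nra. }
  apply Rmult_le_reg_l with N. lra.
  replace (N * (2 / N)) with 2 by (field; lra). lra.
Qed.

Lemma a_lower k : (1 <= k <= m)%nat -> 1 <= 2 * Bn x k * Rabs (a x k).
Proof.
  intros H. pose proof (Bn_bounds x m Hx Hlen k H) as [_ H1].
  pose proof (BN k H). pose proof (a_nz x m Hlen k H).
  pose proof (Rabs_pos_lt _ H2).
  assert (Hi : / Rabs (a x k) <= 2 * Bn x k) by lra.
  replace 1 with (/ Rabs (a x k) * Rabs (a x k)) by (field; lra). nra.
Qed.


Lemma rho_rel n : (S n <= m)%nat -> rhoF n / (a x (S n) * a x (S n)) = rhoF (S n).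
Proof.
  intros H.
  assert (E : a x (S n) * a x (S n) = Rabs (a x (S n)) * Rabs (a x (S n))).
  { destruct (Rcase_abs (a x (S n))); [rewrite Rabs_left by lra| rewrite Rabs_right by lra]; ring. }
  rewrite E, (a_abs x m Hlen (S n) ltac:(lia)).
  unfold rhoF. pose proof (Dn_pos x (S n)). pose proof (Dn_pos x (S (S n))).
  field. split; lra.
Qed.

Lemma iter_disk z : Disk z (a x 1) (rhoF 0) ->
  forall n, (S n <= m)%nat -> Disk (Giter n z) (a x (S n)) (rhoF n).
Proof.
  intros Hz. induction n as [|n IH]; intros H. exact Hz.
  specialize (IH ltac:(lia)).
  change (Giter (S n) z) with (G (Giter n z)).
  destruct (Giter n z) as [u v].
  rewrite <- rho_rel by lia.
  rewrite a_step with (m := m) by (auto; lia).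
  apply G_step. apply (a_nz x m Hlen); lia. apply rho_pos. exact IH.
  rewrite <- a_step with (m := m) by (auto; lia).
  rewrite rho_rel by lia.
  pose proof (a_upper (S (S n)) ltac:(lia)).
  pose proof (rho_bound1 (S n) ltac:(lia)).
  assert (4 * c / N <= 4 / N).
  { unfold Rdiv. apply Rmult_le_compat_r. left; apply Rinv_0_lt_compat; lra. lra. }
  assert (2 / N + 4 / N < /2).
  { replace (2 / N + 4 / N) with (6 / N) by (field; lra).
    apply Rmult_lt_reg_l with N. lra. replace (N * (6 / N)) with 6 by (field; lra). lra. }
  lra.
Qed.

Definition argprop (w : C) : Prop :=
  ((0 < Re w)%R -> arg_in w (- (PI / 4)) (PI / 4)) /\
  ((Re w < 0)%R -> arg_in w (3 * PI / 4) (5 * PI / 4)).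

Lemma final_props z : Disk z (a x 1) (rhoF 0) ->
  forall n, (S n <= m)%nat ->
    Cmod (Giter n z) <= 10 / N /\ ((S (S n) <= m)%nat -> argprop (Giter n z)).
Proof.
  intros Hz n H. pose proof (iter_disk z Hz n H) as HD.
  destruct (Giter n z) as [u v].
  pose proof (rho_pos n) as Hr.
  destruct (disk_bounds u v _ _ Hr HD) as [_ [_ HC]].
  split.
  - pose proof (a_upper (S n) ltac:(lia)).
    pose proof (rho_bound1 n H).
    assert (4 * c / N <= 4 / N).
    { unfold Rdiv. apply Rmult_le_compat_r. left; apply Rinv_0_lt_compat; lra. lra. }
    replace (10 / N) with (2 / N + 2 * (4 / N)) by (field; lra). lra.
  - intros H2.
    pose proof (rho_bound2 n H2).
    pose proof (BN (S n) ltac:(lia)). pose proof (BN (S (S n)) ltac:(lia)).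
    pose proof (Hgrow (S n) ltac:(lia) ltac:(lia)).
    pose proof (a_lower (S n) ltac:(lia)).
    set (B1 := Bn x (S n)) in *. set (B2 := Bn x (S (S n))) in *.
    set (r0 := rhoF n) in *. set (al := Rabs (a x (S n))) in *.
    assert (0 <= r0 * N) by (apply Rmult_le_pos; lra).
    assert (r0 * N * (B1 * B1) <= 8).
    { apply Rle_trans with (r0 * N * B2). apply Rmult_le_compat_l; lra. nra. }
    assert (8 * r0 * B1 <= 1).
    { assert (0 <= r0) by lra.
      assert (0 <= r0 * B1 * B1) by (apply Rmult_le_pos; [apply Rmult_le_pos|]; lra).
      assert (64 * (r0 * B1 * B1) <= N * (r0 * B1 * B1)) by (apply Rmult_le_compat_r; lra).
      assert (r0 * B1 * 1 <= r0 * B1 * B1) by (apply Rmult_le_compat_l; [apply Rmult_le_pos|]; lra).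
      lra. }
    assert (Hra : r0 <= al / 4) by nra.
    destruct (disk_cone u v _ _ (a_nz x m Hlen (S n) ltac:(lia)) Hr Hra HD) as [Hu Hv].
    apply arg_lemma; auto.
Qed.

End Main.


Lemma Qred_id (n : Z) (d : positive) : Z.gcd n (Zpos d) = 1%Z -> Qred (n # d) = (n # d)%Q.
Proof.
  intros Hg. unfold Qred.
  pose proof (Z.ggcd_correct_divisors n (Zpos d)) as Hc.
  pose proof (Z.ggcd_gcd n (Zpos d)) as Hg2.
  destruct (Z.ggcd n (Zpos d)) as [g [aa bb]]. simpl in *.
  rewrite Hg in Hg2. subst g. destruct Hc as [H1 H2].
  rewrite Z.mul_1_l in H1, H2. subst. reflexivity.
Qed.

Lemma ratQ_R p q i : (0 < q i)%Z -> Q2R (ratQ p q i) = IZR (p i) / IZR (q i).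
Proof. intros H. unfold ratQ, Q2R. simpl. rewrite Z2Pos.id by auto. reflexivity. Qed.

Lemma ratQ_Dn p q i : (0 < q i)%Z -> Dn (ratQ p q i) 1 = IZR (q i).
Proof. intros H. unfold Dn, ratQ. rewrite mcf_x_1. simpl. rewrite Z2Pos.id by auto. reflexivity. Qed.

Lemma ratQ_bounds p q i : (- (1 # 2) < ratQ p q i <= 1 # 2)%Q -> -/2 < Q2R (ratQ p q i) <= /2.
Proof.
  intros [H1 H2]. apply Qlt_Rlt in H1. apply Qle_Rle in H2.
  replace (Q2R (- (1 # 2))) with (-/2) in H1 by (unfold Q2R; simpl; field).
  replace (Q2R (1 # 2)) with (/2) in H2 by (unfold Q2R; simpl; field).
  lra.
Qed.

Lemma mcf_q_eq p q mm i : (0 < q i)%Z -> Z.gcd (p i) (q i) = 1%Z ->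
  (- (1 # 2) < ratQ p q i <= 1 # 2)%Q -> mcf_len (ratQ p q i) mm ->
  mcf_q (ratQ p q i) mm = q i.
Proof.
  intros Hq Hg Hb Hl. unfold mcf_q.
  rewrite (Qred_complete _ _ (trunc_eq _ _ (ratQ_bounds p q i Hb) Hl)).
  unfold ratQ. rewrite Qred_id. simpl. apply Z2Pos.id; auto.
  rewrite Z2Pos.id; auto.
Qed.

Lemma q_ge_b p q mm i : (0 < q i)%Z ->
  (- (1 # 2) < ratQ p q i <= 1 # 2)%Q -> mcf_len (ratQ p q i) mm ->
  (mcf_b (ratQ p q i) 1 <= q i)%Z.
Proof.
  intros Hq Hb Hl.
  assert (Hm : (1 <= 1 <= mm)%nat) by (destruct Hl; lia).
  pose proof (Dn_bounds _ _ (ratQ_bounds p q i Hb) Hl 1 Hm) as [H1 _].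
  rewrite ratQ_Dn in H1 by auto.
  pose proof (Dn_pos (ratQ p q i) 2).
  assert (0 <= Bn (ratQ p q i) 1) by (unfold Bn, mcf_b; apply IZR_le; lia).
  assert (IZR (mcf_b (ratQ p q i) 1) < IZR (q i) + 1).
  { unfold Bn in *. destruct (Rle_dec (IZR (mcf_b (ratQ p q i) 1)) (/2)). assert (1 <= IZR (q i)) by (apply IZR_le; lia). lra.
    assert (0 <= (Dn (ratQ p q i) 2 - 1) * (IZR (mcf_b (ratQ p q i) 1) - /2)) by (apply Rmult_le_pos; lra).
    lra. }
  rewrite <- plus_IZR in H2. apply lt_IZR in H2. lia.
Qed.

Lemma fold_mul (f : nat -> Z) l c :
  fold_right (fun i acc => (f i * acc)%Z) c l = (fold_right (fun i acc => (f i * acc)%Z) 1%Z l * c)%Z.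
Proof. induction l; simpl. destruct c; reflexivity. rewrite IHl. ring. Qed.

Lemma kseq_S p q m n : (1 <= n)%nat ->
  kseq p q m (S n) = (kseq p q m n * mcf_q (ratQ p q n) (m n))%Z.
Proof.
  intros H. unfold kseq. replace (S n - 1)%nat with n by lia.
  destruct n as [|n]. lia. replace (S n - 1)%nat with n by lia.
  rewrite seq_S, fold_right_app. rewrite (fold_mul (fun i => mcf_q (ratQ p q i) (m i))). f_equal.
  change (fold_right (fun i acc => (mcf_q (ratQ p q i) (m i) * acc)%Z) 1%Z ((1 + n)%nat :: nil)) with (mcf_q (ratQ p q (S n)) (m (S n)) * 1)%Z.
  rewrite Z.mul_1_r. reflexivity.
Qed.

Lemma kseq_pos p q m n : (1 <= kseq p q m n)%Z.
Proof.
  unfold kseq. induction (seq 1 (n - 1)) as [|j l IH]; cbn [fold_right]. lia.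
  assert (1 <= mcf_q (ratQ p q j) (m j))%Z by (unfold mcf_q; lia). nia.
Qed.


Section Chain.
Variables (N : Z) (p q : nat -> Z) (m : nat -> nat).
Hypothesis HQ : in_QG N p q m.

Lemma Qi j : (1 <= j)%nat -> mcf_q (ratQ p q j) (m j) = q j.
Proof.
  intros H. destruct HQ as [H1 _]. destruct (H1 j H) as [Hq [Hg [_ [Hb Hl]]]].
  apply mcf_q_eq; auto.
Qed.

Lemma qb j : (1 <= j)%nat -> (mcf_b (ratQ p q j) 1 <= q j)%Z /\ (0 < q j)%Z.
Proof.
  intros H. destruct HQ as [H1 _]. destruct (H1 j H) as [Hq [Hg [_ [Hb Hl]]]].
  split; auto. apply q_ge_b with (mm := m j); auto.
Qed.

Lemma bN j : (1 <= j)%nat -> (N <= mcf_b (ratQ p q j) 1)%Z.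
Proof.
  induction j as [|j IH]; intros H. lia.
  destruct j as [|j]. destruct HQ as [_ [H2 _]]. exact H2.
  specialize (IH ltac:(lia)).
  destruct HQ as [_ [_ [H3 _]]]. specialize (H3 (S j) ltac:(lia)).
  rewrite Qi in H3 by lia. destruct (qb (S j) ltac:(lia)). nia.
Qed.

Lemma CH n : (1 <= n)%nat -> (N * kseq p q m (S n) <= q n ^ 2)%Z.
Proof.
  induction n as [|n IH]; intros H. lia.
  rewrite kseq_S by lia. rewrite Qi by lia.
  destruct n as [|n].
  - replace (kseq p q m 1) with 1%Z by reflexivity.
    pose proof (bN 1 ltac:(lia)). destruct (qb 1 ltac:(lia)). nia.
  - specialize (IH ltac:(lia)).
    destruct HQ as [_ [_ [H3 _]]]. specialize (H3 (S n) ltac:(lia)).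
    rewrite Qi in H3 by lia.
    destruct (qb (S (S n)) ltac:(lia)). destruct (qb (S n) ltac:(lia)).
    nia.
Qed.

Lemma Nk i : (1 <= i)%nat -> (N * kseq p q m i <= mcf_b (ratQ p q i) 1)%Z.
Proof.
  intros H. destruct i as [|i]. lia. destruct i as [|i].
  - replace (kseq p q m 1) with 1%Z by reflexivity. pose proof (bN 1 ltac:(lia)). lia.
  - pose proof (CH (S i) ltac:(lia)).
    destruct HQ as [_ [_ [H3 _]]]. specialize (H3 (S i) ltac:(lia)).
    rewrite Qi in H3 by lia. lia.
Qed.

End Chain.

Close Scope R_scope.

Theorem proposition6p7 :
  forall r : R, (0 < r < /2)%R ->
  exists N : Z, (2 <= N)%Z /\
  forall (p q : nat -> Z) (m : nat -> nat),
    in_QG N p q m ->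
    forall (i : nat) (z : C), (1 <= i)%nat ->
      let rho := (ln 2 / (2 * PI) * (IZR (kseq p q m i) / IZR (q i)))%R in
      (Cmod (Cminus z (IZR (p i) / IZR (q i), (- rho)%R)) <= rho)%R ->
      (forall n : nat, (n + 2 <= m i)%nat ->
         (Cmod (Giter n z) <= r)%R /\
         ((0 < Re (Giter n z))%R -> arg_in (Giter n z) (- (PI / 4)) (PI / 4)) /\
         ((Re (Giter n z) < 0)%R -> arg_in (Giter n z) (3 * PI / 4) (5 * PI / 4))) /\
      (Cmod (Giter (m i - 1) z) <= r)%R.
Proof.
  intros r Hr.
  exists (Z.max 64 (up (10 / r))). split. lia.
  intros p q m HQ i z Hi rho Hz.
  set (N := Z.max 64 (up (10 / r))) in *.
  pose proof HQ as HQ'.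
  destruct HQ' as [H1 [H2 [H3 H4]]].
  destruct (H1 i Hi) as [Hq [Hg [Hp [Hb Hl]]]].
  set (x := ratQ p q i) in *.
  pose proof (ratQ_bounds p q i Hb) as Hx. fold x in Hx.
  assert (HN64 : (64 <= IZR N)%R) by (apply IZR_le; unfold N; lia).
  assert (HNr : (10 / r <= IZR N)%R).
  { destruct (archimed (10 / r)) as [Ha _].
    assert (IZR (up (10 / r)) <= IZR N)%R by (apply IZR_le; unfold N; lia). lra. }
  assert (H10 : (10 / IZR N <= r)%R).
  { apply Rmult_le_reg_l with (IZR N). lra.
    replace (IZR N * (10 / IZR N))%R with 10%R by (field; lra).
    apply Rmult_le_reg_r with (/ r)%R. apply Rinv_0_lt_compat; lra.
    replace (IZR N * r * / r)%R with (IZR N) by (field; lra). exact HNr. }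
  set (kk := IZR (kseq p q m i)).
  assert (Hkk : (1 <= kk)%R) by (apply IZR_le; apply kseq_pos).
  assert (HNk : (IZR N * kk <= Bn x 1)%R).
  { unfold kk, Bn. rewrite <- mult_IZR. apply IZR_le. apply Nk; auto. }
  set (c := (ln 2 / (2 * PI))%R).
  assert (Hc : (0 < c <= 1)%R).
  { pose proof ln_lt_2. pose proof PI2_1.
    assert (ln 2 < 2)%R.
    { rewrite <- (ln_exp 2) at 2. apply ln_increasing. lra.
      pose proof (exp_ineq1 2 ltac:(lra)). lra. }
    unfold c. split. apply Rdiv_lt_0_compat; lra.
    apply Rmult_le_reg_r with (2 * PI)%R. lra.
    replace (ln 2 / (2 * PI) * (2 * PI))%R with (ln 2) by (field; lra). lra. }
  assert (Hgrow : forall j, (1 <= j)%nat -> (j + 1 <= m i)%nat ->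
                    (Bn x j * Bn x j <= Bn x (S j))%R).
  { intros j Hj1 Hj2. specialize (H4 i j Hi ltac:(lia)). fold x in H4.
    unfold Bn. rewrite <- mult_IZR. apply IZR_le. rewrite Z.pow_2_r in H4. exact H4. }
  assert (Hq1 : (1 <= IZR (q i))%R) by (apply IZR_le; lia).
  assert (Erho : rhoF x kk c 0 = rho).
  { unfold rhoF. unfold x. rewrite ratQ_Dn by auto. unfold rho, c, kk. pose proof PI_RGT_0. field. split; lra. }
  assert (Ea : a x 1 = (IZR (p i) / IZR (q i))%R).
  { unfold a. rewrite mcf_x_1. unfold x. rewrite ratQ_R by auto. reflexivity. }
  assert (HD : Disk z (a x 1) (rhoF x kk c 0)).
  { rewrite Erho, Ea. unfold Disk.
    destruct z as [z1 z2]. unfold Cmod, Cminus, Cplus, Copp in Hz. simpl in Hz. simpl.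
    assert (Hrho : (0 <= rho)%R).
    { eapply Rle_trans. apply sqrt_pos. exact Hz. }
    set (S := ((z1 + - (IZR (p i) / IZR (q i))) * ((z1 + - (IZR (p i) / IZR (q i))) * 1) +
               (z2 + - - rho) * ((z2 + - - rho) * 1))%R) in Hz.
    assert (HS : (0 <= S)%R).
    { unfold S. pose proof (Rle_0_sqr (z1 + - (IZR (p i) / IZR (q i)))).
      pose proof (Rle_0_sqr (z2 + - - rho)). unfold Rsqr in *. lra. }
    assert (Hsq : (sqrt S * sqrt S <= rho * rho)%R).
    { apply Rmult_le_compat; auto using sqrt_pos. }
    rewrite sqrt_sqrt in Hsq by auto. unfold S in Hsq.
    replace (z1 - IZR (p i) / IZR (q i))%R with (z1 + - (IZR (p i) / IZR (q i)))%R by ring.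
    replace (z2 + rho)%R with (z2 + - - rho)%R by ring. lra. }
  pose proof (final_props x (m i) Hx Hl (IZR N) kk c HN64 Hkk HNk Hc Hgrow z HD) as FP.
  split.
  - intros n Hn. destruct (FP n ltac:(lia)) as [Hc1 Ha]. 
    destruct (Ha ltac:(lia)) as [Ha1 Ha2].
    split. lra. split; auto.
  - destruct Hl as [Hm _].
    destruct (FP (m i - 1)%nat ltac:(lia)) as [Hc1 _]. lra.
Qed.
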